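(* Let $k\ge2$ and let $B$ be a $k\times k$ symmetric matrix over $\mathbb F_2$ of rank $k-2$ with every row sum $0$. Let $\Sigma_B$ be the set of $\alpha=(\alpha_1,\dots,\alpha_k)$ with $\alpha_j\in\{1,5,9,13\}$ and $\prod_j\alpha_j\equiv1\pmod8$ such that the $k\times(k+1)$ matrix $(B\mid\mathfrak b_\alpha)$ has rank $k-1$ over $\mathbb F_2$, where $\mathfrak b_\alpha=([2/\alpha_1],\dots,[2/\alpha_k])^T$. Then $\#\Sigma_B=2^{2k-2}$.
   Context: For an odd integer $a$, $[2/a]=1$ if $a\equiv\pm5\pmod8$ and $[2/a]=0$ otherwise. *)

(* Defs.v *)
From HB Require Import structures.
From mathcomp Require Import all_boot all_order all_algebra.
Set Implicit Arguments. Unset Strict Implicit. Unset Printing Implicit Defensive.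
Import GRing.Theory.

(* The symbol [2/a] for odd a: 1 if a = +-5 (mod 8), i.e. a mod 8 in {3,5}; 0 otherwise. *)
Definition sym2 (a : nat) : 'F_2 :=
  if (a %% 8 == 5)%N || (a %% 8 == 3)%N then 1%R else 0%R.

Definition balpha (k : nat) (alpha : 'I_k -> nat) : 'cV['F_2]_k :=
  \col_(j < k) sym2 (alpha j).

Definition SigmaB (k : nat) (B : 'M['F_2]_k) : {set {ffun 'I_k -> 'I_16}} :=
  [set alpha : {ffun 'I_k -> 'I_16} |
     [&& [forall j, (alpha j : nat) \in [:: 1; 5; 9; 13]%N],
         ((\prod_(j < k) (alpha j : nat)) %% 8 == 1)%N
       & (\rank (row_mx B (balpha (fun j => (alpha j : nat)))) == k.-1)%N]].

(* Main.v *)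
Require Import Defs.
From HB Require Import structures.
From mathcomp Require Import all_boot all_order all_algebra zify.
Set Implicit Arguments. Unset Strict Implicit. Unset Printing Implicit Defensive.
Import GRing.Theory.

Definition enc (b c : 'F_2) : 'I_16 := inord (1 + 4 * b + 8 * c).

Lemma F2_lt2 (x : 'F_2) : (x < 2)%N.
Proof. by case: x. Qed.

Lemma enc_val b c : (enc b c : nat) = (1 + 4 * b + 8 * c)%N.
Proof.
rewrite /enc inordK //; have := F2_lt2 b; have := F2_lt2 c; lia.
Qed.

Lemma sym2_enc b c : sym2 (enc b c) = b.
Proof.
rewrite enc_val /sym2.
case: b => [[|[|n]] Hb] //=; case: c => [[|[|m]] Hc] //=;
  by apply: val_inj.
Qed.

Lemma enc_in b c : (enc b c : nat) \in [:: 1; 5; 9; 13]%N.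
Proof.
rewrite enc_val.
by case: b => [[|[|n]] Hb] //=; case: c => [[|[|m]] Hc].
Qed.

Lemma enc_inj : forall b c b' c', enc b c = enc b' c' -> b = b' /\ c = c'.
Proof.
move=> b c b' c' /(congr1 val) /=; rewrite !enc_val => e.
have := F2_lt2 b; have := F2_lt2 c; have := F2_lt2 b'; have := F2_lt2 c'.
move=> h1 h2 h3 h4.
by split; apply: val_inj => /=; lia.
Qed.

Lemma prod_mod8 (I : Type) (r : seq I) (P : pred I) (fb fc : I -> nat) :
  ((\prod_(i <- r | P i) (1 + 4 * fb i + 8 * fc i)) %% 8 =
   (1 + 4 * ((\sum_(i <- r | P i) fb i) %% 2)) %% 8)%N.
Proof.
apply: (big_rec2 (fun p s => p %% 8 = (1 + 4 * (s %% 2)) %% 8)%N) => // i p s _ IH.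
rewrite -modnMmr IH modnMmr.
have : (s %% 2 < 2)%N by rewrite ltn_mod.
rewrite -(modnDmr (fb i)).
case: (s %% 2)%N => [|[|t]] // _; lia.
Qed.

Lemma val_sumF2 (I : Type) (r : seq I) (P : pred I) (f : I -> 'F_2) :
  (((\sum_(i <- r | P i) f i)%R : 'F_2) : nat) = ((\sum_(i <- r | P i) (f i : nat)) %% 2)%N.
Proof.
apply: (big_rec2 (fun (x : 'F_2) n => (x : nat) = n %% 2)%N) => // i x n _ IH.
by rewrite -modnDmr -IH.
Qed.
Lemma card_sub_rowspace (F : finFieldType) m n (A : 'M[F]_(m, n)) :
  #|[set b : 'rV[F]_n | (b <= A)%MS]| = (#|F| ^ \rank A)%N.
Proof.
have -> : [set b : 'rV[F]_n | (b <= A)%MS] =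
   [set (x *m row_base A)%R | x in [set: 'rV[F]_(\rank A)]].
  apply/setP => b; rewrite inE; apply/idP/imsetP.
    rewrite -(eq_row_base A) => /submxP [x ->]; by exists x; rewrite ?inE.
  by move=> [x _ ->]; rewrite -(eq_row_base A) submxMl.
rewrite card_imset; last exact: row_free_inj (row_base_free A).
by rewrite cardsT card_mx mul1n.
Qed.

Lemma rank_adds_row (F : fieldType) m n (B : 'M[F]_(m, n)) (v : 'rV[F]_n) :
  \rank (B + v)%MS = if (v <= B)%MS then \rank B else (\rank B).+1.
Proof.
case: ifP => vB; first by rewrite (addsmx_idPl vB).
apply/eqP; rewrite eqn_leq; apply/andP; split.
  apply: leq_trans (leq_of_leqif (mxrank_adds_leqif B v)) _.
  by rewrite -[X in (_ <= X)%N]addn1 leq_add2l rank_leq_row.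
by rewrite (ltn_leqif (mxrank_leqif_sup (addsmxSl B v))) addsmx_sub submx_refl vB.
Qed.

Theorem mainTheorem9 (k : nat) (hk : (2 <= k)%N) (B : 'M['F_2]_k)
  (hsym : (B^T)%R = B) (hrank : \rank B = (k - 2)%N)
  (hrow : forall i : 'I_k, (\sum_(j < k) B i j)%R = 0%R) :
  #|SigmaB B| = (2 ^ (2 * k - 2))%N.
Proof.
pose K := kermx (const_mx 1%R : 'cV['F_2]_k).
pose G := [set b : 'rV['F_2]_k | (b <= K)%MS && ~~ (b <= B)%MS].
pose f := fun p : 'rV['F_2]_k * 'rV['F_2]_k =>
  [ffun j => enc (p.1 ord0 j) (p.2 ord0 j)].
have fbal : forall p, balpha (fun j => (f p j : nat)) = (p.1)^T%R.
  move=> p; apply/matrixP => i j; rewrite !mxE ffunE sym2_enc.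
  by rewrite (ord1 j).
have fprod : forall p,
    ((\prod_(j < k) (f p j : nat)) %% 8 == 1)%N = (p.1 <= K)%MS.
  move=> p; rewrite sub_kermx.
  have -> : (p.1 *m (const_mx 1%R : 'cV['F_2]_k) == 0)%R = ((p.1 *m (const_mx 1%R : 'cV['F_2]_k))%R ord0 ord0 == 0%R).
    apply/eqP/eqP => [->|e]; first by rewrite mxE.
    by apply/matrixP => i j; rewrite (ord1 i) (ord1 j) e !mxE.
  have -> : ((p.1 *m (const_mx 1%R : 'cV['F_2]_k))%R ord0 ord0 = \sum_(j < k) p.1 ord0 j)%R.
    by rewrite !mxE; apply: eq_bigr => j _; rewrite mxE GRing.mulr1.
  have -> : (\sum_(j < k) p.1 ord0 j == 0 :> 'F_2)%R
      = ((((\sum_(j < k) p.1 ord0 j)%R : 'F_2) : nat) == 0)%N.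
    by apply/eqP/eqP => [->|e] //; apply: val_inj.
  rewrite /f; under eq_bigr do rewrite ffunE enc_val.
  rewrite prod_mod8.
  rewrite val_sumF2.
  have : ((\sum_(j < k) (p.1 ord0 j : nat)) %% 2 < 2)%N by rewrite ltn_mod.
  by case: (_ %% 2)%N => [|[|t]].
have frank : forall b : 'rV['F_2]_k,
    (\rank (row_mx B (b^T)%R) == k.-1)%N = ~~ (b <= B)%MS.
  move=> b; rewrite -mxrank_tr tr_row_mx trmxK hsym.
  rewrite -(addsmxE B b).1 rank_adds_row hrank.
  case: (b <= B)%MS => /=; apply/eqP; lia.
have fin : forall p, [forall j, (f p j : nat) \in [:: 1; 5; 9; 13]%N].
  by move=> p; apply/forallP => j; rewrite ffunE enc_in.
have finj : injective f.
  move=> [b c] [b' c'] /= e.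
  have e' : forall j, b ord0 j = b' ord0 j /\ c ord0 j = c' ord0 j.
    move=> j; apply: enc_inj; by rewrite -[LHS](ffunE (fun j => enc (b ord0 j) (c ord0 j))) -[RHS](ffunE (fun j => enc (b' ord0 j) (c' ord0 j))) -/(f (b, c)) e.
  congr pair; apply/matrixP => i j; rewrite (ord1 i); by case: (e' j).
have hS : SigmaB B = f @: setX G [set: 'rV['F_2]_k].
  apply/setP => a; rewrite /SigmaB inE; apply/idP/imsetP.
    move=> /and3P [/forallP ha hp hr].
    pose b : 'rV['F_2]_k := (\row_(j < k) (inord (((a j : nat) %/ 4) %% 2) : 'F_2))%R.
    pose c : 'rV['F_2]_k := (\row_(j < k) (inord ((a j : nat) %/ 8) : 'F_2))%R.
    have ea : a = f (b, c).
      apply/ffunP => j; rewrite /f ffunE; apply: ord_inj; rewrite enc_val /b /c /= !mxE.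
      move: (ha j); rewrite !inE => /or4P [] /eqP -> //=; rewrite !inordK //.
    exists (b, c) => //; rewrite !inE /= andbT.
    move: hp hr; rewrite ea fbal fprod frank => -> -> //.
  move=> [[b c] /setXP [hG _] ->]; move: hG; rewrite inE => /andP [h1 h2].
  by rewrite fin fprod fbal frank h1 h2.
rewrite hS card_imset // cardsX cardsT card_mx card_Fp // mul1n.
have hG : #|G| = (2 ^ (k - 2))%N.
  have hBK : (B <= K)%MS.
    rewrite sub_kermx; apply/eqP/matrixP => i j; rewrite !mxE -[RHS](hrow i).
    by apply: eq_bigr => l _; rewrite !mxE GRing.mulr1.
  have hones : \rank (const_mx 1%R : 'cV['F_2]_k) = 1%N.
    apply/eqP; rewrite eqn_leq rank_leq_col lt0n mxrank_eq0.
    apply/negP => /eqP /matrixP /(_ (Ordinal (leq_trans (isT : (0 < 2)%N) hk)) ord0).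
    by rewrite !mxE.
  have := cardsID [set b : 'rV['F_2]_k | (b <= B)%MS] [set b : 'rV['F_2]_k | (b <= K)%MS].
  have -> : [set b : 'rV['F_2]_k | (b <= K)%MS] :\: [set b | (b <= B)%MS] = G.
    by apply/setP => b; rewrite !inE andbC.
  have -> : [set b : 'rV['F_2]_k | (b <= K)%MS] :&: [set b | (b <= B)%MS]
           = [set b | (b <= B)%MS].
    apply/setP => b; rewrite !inE; apply/andb_idl => /submx_trans; exact.
  rewrite !card_sub_rowspace card_Fp // hrank mxrank_ker hones.
  have -> : (k - 1 = (k - 2).+1)%N by lia.
  rewrite expnS => e; lia.
rewrite hG -expnD; congr (_ ^ _)%N; lia.
Qed.
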